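(* Consider the $\mathcal N$-system (setting in the context) with $\boldsymbol\lambda\to(\mu_1,\mu_2)$, operating under a scheduling policy that achieves state space collapse. Let $\Phi=\{\boldsymbol\phi\in\mathbb C^2:\mathrm{Re}(\phi_1)\le0,\mathrm{Re}(\phi_1+\phi_2)\le0\}$ and $\boldsymbol\phi\in\Phi$. Then, with expectations under the stationary distribution: 1. $\lim_{\epsilon\to0}|\mathbb E[e^{\epsilon(\phi_1q_1+\phi_2q_2)}]|<\infty$, $\lim_{\epsilon\to0}|\mathbb E[e^{\epsilon(\phi_1+\phi_2)q_2}\mid q_1\le q_2]|<\infty$ and $\lim_{\epsilon\to0}|\mathbb E[e^{\epsilon\phi_1q_1}\mid q_2=0]|<\infty$; 2. $\lim_{\epsilon\to0}\mathbb E[e^{\epsilon(\phi_1q_1+\phi_2q_2)}]=\lim_{\epsilon\to0}\mathbb E\big[e^{\epsilon(\phi_1(q_1-q_2)\mathbf 1_{\{q_1\ge q_2\}}+(\phi_1+\phi_2)q_2)}\big]$.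
   Context: $\mathcal N$-system: continuous time, queues $q_1,q_2$ with independent Poisson arrivals of rates $\lambda_1,\lambda_2$; server $S_1$ (exponential rate $\mu_1$) serves either class, one queue at a time; server $S_2$ (rate $\mu_2$) serves only class 2; configurations ($S_1\to q_1$, $S_2\to q_2$) or (both $\to q_2$). The policy makes $(q_1(t),q_2(t))$ an irreducible aperiodic positive recurrent Markov chain; $(q_1,q_2)$ is stationary. $\lambda_1=(1-\epsilon)\mu_1$, $\lambda_1+\lambda_2=(1-\gamma\epsilon)(\mu_1+\mu_2)$, fixed $\gamma>0$, $\epsilon\to0$. With $\mathcal K_3=\{\mathbf x\in\mathbb R^2_+:x_2\le x_1\}$ and $\mathbf q_{\perp\mathcal K_3}=\frac{q_2-q_1}{2}(-1,1)\mathbf 1_{\{q_2>q_1\}}$, state space collapse means: for every $\theta\ge0$ there are $\epsilon(\theta)>0$ and $C^\star<\infty$ with $\mathbb E[e^{\epsilon\theta\|\mathbf q_{\perp\mathcal K_3}\|}]<C^\star$ for $0<\epsilon\le\epsilon(\theta)$, and for each nonnegative integer $r$, $\mathbb E\|\mathbf q_{\perp\mathcal K_3}\|^r\le C_r$ independent of $\epsilon$. *)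

(* Defs.v *)
From Stdlib Require Import Reals Lra Relations Bool.
From Coquelicot Require Import Coquelicot.
Open Scope R_scope.
Open Scope bool_scope.

Definition state : Type := (nat * nat)%type.

(* lambda1 = (1-eps) mu1,  lambda1 + lambda2 = (1 - gamma eps)(mu1 + mu2) *)
Definition lam1 (mu1 eps : R) : R := (1 - eps) * mu1.
Definition lam2 (mu1 mu2 gamma eps : R) : R :=
  (1 - gamma * eps) * (mu1 + mu2) - (1 - eps) * mu1.

(** A stationary (possibly randomized) scheduling policy: sigma x in [0,1] is
    the probability that in state x the configuration (S1 -> q1, S2 -> q2) is
    used; with probability 1 - sigma x both servers serve q2.
    Deterministic policies are the case sigma x in {0,1}. *)
Definition policy_ok (sigma : state -> R) : Prop :=
  forall x, 0 <= sigma x <= 1.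

(** Config (S1->q1,S2->q2): q1 -1 at rate mu1 if q1>0, q2 -1 at rate mu2 if q2>0.
    Config (both -> q2): q2 -1 at rate mu1+mu2 if q2>0. *)
Definition rate (mu1 mu2 gamma eps : R) (sigma : state -> R) (x y : state) : R :=
  let '(a, b) := x in
  let '(c, d) := y in
  if Nat.eqb c (S a) && Nat.eqb d b then lam1 mu1 eps
  else if Nat.eqb c a && Nat.eqb d (S b) then lam2 mu1 mu2 gamma eps
  else if Nat.ltb 0 a && Nat.eqb (S c) a && Nat.eqb d b then sigma x * mu1
  else if Nat.ltb 0 b && Nat.eqb c a && Nat.eqb (S d) b then
    sigma x * mu2 + (1 - sigma x) * (mu1 + mu2)
  else 0.

Definition outrate (mu1 mu2 gamma eps : R) (sigma : state -> R) (y : state) : R :=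
  let '(a, b) := y in
  rate mu1 mu2 gamma eps sigma y (S a, b)
  + rate mu1 mu2 gamma eps sigma y (a, S b)
  + (if Nat.ltb 0 a then rate mu1 mu2 gamma eps sigma y (pred a, b) else 0)
  + (if Nat.ltb 0 b then rate mu1 mu2 gamma eps sigma y (a, pred b) else 0).

(** Total inflow of probability mass into y (only neighbours can jump to y). *)
Definition inflow (mu1 mu2 gamma eps : R) (sigma : state -> R) (pi : state -> R)
  (y : state) : R :=
  let '(a, b) := y in
  pi (S a, b) * rate mu1 mu2 gamma eps sigma (S a, b) y
  + pi (a, S b) * rate mu1 mu2 gamma eps sigma (a, S b) y
  + (if Nat.ltb 0 a then pi (pred a, b) * rate mu1 mu2 gamma eps sigma (pred a, b) y else 0)
  + (if Nat.ltb 0 b then pi (a, pred b) * rate mu1 mu2 gamma eps sigma (a, pred b) y else 0).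

Definition irreducible (mu1 mu2 gamma eps : R) (sigma : state -> R) : Prop :=
  forall x y : state,
    clos_refl_trans state (fun u v => 0 < rate mu1 mu2 gamma eps sigma u v) x y.

(* summability of a nonnegative function on N^2 (iterated = unordered sum) *)
Definition dsummable (f : state -> R) : Prop :=
  (forall i, ex_series (fun j => f (i, j))) /\
  ex_series (fun i => Series (fun j => f (i, j))).
Definition dsum (f : state -> R) : R := Series (fun i => Series (fun j => f (i, j))).
Definition dsumC (f : state -> C) : C :=
  (dsum (fun x => Re (f x)), dsum (fun x => Im (f x))).

Definition is_prob (pi : state -> R) : Prop :=
  (forall x, 0 <= pi x) /\ dsummable pi /\ dsum pi = 1.

(** pi is the stationary distribution of the chain: a probability solving the
    global balance equations pi Q = 0. *)
Definition stationary (mu1 mu2 gamma eps : R) (sigma : state -> R) (pi : state -> R) : Prop :=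
  is_prob pi /\
  forall y, pi y * outrate mu1 mu2 gamma eps sigma y = inflow mu1 mu2 gamma eps sigma pi y.

Definition Pr (pi : state -> R) (A : state -> bool) : R :=
  dsum (fun x => if A x then pi x else 0).
Definition ExpR (pi : state -> R) (f : state -> R) : R := dsum (fun x => pi x * f x).
Definition integrableC (pi : state -> R) (g : state -> C) : Prop :=
  dsummable (fun x => pi x * Cmod (g x)).
Definition ExpC (pi : state -> R) (g : state -> C) : C :=
  dsumC (fun x => Cmult (RtoC (pi x)) (g x)).
Definition restrC (A : state -> bool) (g : state -> C) : state -> C :=
  fun x => if A x then g x else RtoC 0.
Definition CondExpC (pi : state -> R) (A : state -> bool) (g : state -> C) : C :=
  Cmult (ExpC pi (restrC A g)) (RtoC (/ Pr pi A)).

Definition cexp (z : C) : C := (exp (Re z) * cos (Im z), exp (Re z) * sin (Im z)).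

Definition q1R (x : state) : R := INR (fst x).
Definition q2R (x : state) : R := INR (snd x).

Definition qperp (x : state) : R * R :=
  if Nat.ltb (fst x) (snd x)
  then ((q2R x - q1R x) / 2 * (-1), (q2R x - q1R x) / 2 * 1)
  else (0, 0).
Definition qperp_norm (x : state) : R :=
  sqrt (fst (qperp x) ^ 2 + snd (qperp x) ^ 2).

Definition ssc (epsbar : R) (pi : R -> state -> R) : Prop :=
  (forall theta, 0 <= theta ->
     exists eps_theta Cstar, 0 < eps_theta /\
       forall eps, 0 < eps <= eps_theta -> eps < epsbar ->
         dsummable (fun x => pi eps x * exp (eps * theta * qperp_norm x)) /\
         ExpR (pi eps) (fun x => exp (eps * theta * qperp_norm x)) < Cstar)
  /\
  (forall r : nat, exists Cr,
     forall eps, 0 < eps < epsbar ->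
       dsummable (fun x => pi eps x * qperp_norm x ^ r) /\
       ExpR (pi eps) (fun x => qperp_norm x ^ r) <= Cr).

Definition ev_q1_le_q2 (x : state) : bool := Nat.leb (fst x) (snd x).
Definition ev_q2_eq0 (x : state) : bool := Nat.eqb (snd x) 0.

Definition tr_joint (phi1 phi2 : C) (eps : R) (x : state) : C :=
  cexp (Cmult (RtoC eps) (Cplus (Cmult phi1 (RtoC (q1R x))) (Cmult phi2 (RtoC (q2R x))))).
Definition tr_q2 (phi1 phi2 : C) (eps : R) (x : state) : C :=
  cexp (Cmult (RtoC eps) (Cmult (Cplus phi1 phi2) (RtoC (q2R x)))).
Definition tr_q1 (phi1 : C) (eps : R) (x : state) : C :=
  cexp (Cmult (RtoC eps) (Cmult phi1 (RtoC (q1R x)))).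
Definition tr_collapsed (phi1 phi2 : C) (eps : R) (x : state) : C :=
  cexp (Cmult (RtoC eps)
    (Cplus (Cmult phi1 (RtoC ((q1R x - q2R x) * (if Nat.leb (snd x) (fst x) then 1 else 0))))
           (Cmult (Cplus phi1 phi2) (RtoC (q2R x))))).

(* Main.v *)
Require Import Defs.
From Stdlib Require Import Reals Lra Arith.
From Coquelicot Require Import Coquelicot.
Open Scope R_scope.

Lemma ser_dom (f g : nat -> R) : (forall n, Rabs (f n) <= g n) -> ex_series g ->
  ex_series f /\ Rabs (Series f) <= Series g.
Proof.
  intros H Hg.
  assert (Ha : ex_series (fun n => Rabs (f n))).
  { apply (@ex_series_le R_AbsRing R_CompleteNormedModule _ g); auto. intro n. change (norm ?x) with (Rabs x). rewrite Rabs_Rabsolu. apply H. }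
  split. apply ex_series_Rabs; auto.
  eapply Rle_trans. apply Series_Rabs; auto.
  apply Series_le; auto. intro n; split; [apply Rabs_pos|apply H].
Qed.

Lemma dsum_dom (f g : state -> R) : (forall x, Rabs (f x) <= g x) -> dsummable g ->
  dsummable f /\ Rabs (dsum f) <= dsum g.
Proof.
  intros H [Hg1 Hg2].
  assert (Hi : forall i, ex_series (fun j => f (i,j)) /\
     Rabs (Series (fun j => f (i,j))) <= Series (fun j => g (i,j))).
  { intro i. apply ser_dom; auto. }
  destruct (ser_dom (fun i => Series (fun j => f (i,j))) (fun i => Series (fun j => g (i,j))))
    as [A B]; auto.
  intro i; apply Hi.
  split. split; auto. intro i; apply Hi. exact B.
Qed.

Lemma dsum_le (f g : state -> R) : (forall x, 0 <= f x <= g x) -> dsummable g ->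
  dsum f <= dsum g.
Proof.
  intros H Hg. destruct (dsum_dom f g) as [_ B]; auto.
  intro x; rewrite Rabs_pos_eq; apply H.
  eapply Rle_trans; [apply Rle_abs|exact B].
Qed.

Lemma dsum_ext (f g : state -> R) : (forall x, f x = g x) -> dsum f = dsum g.
Proof.
  intros H; unfold dsum. apply Series_ext; intro i; apply Series_ext; intro j; apply H.
Qed.

Lemma dsum_minus (f g : state -> R) : dsummable f -> dsummable g ->
  dsum (fun x => f x - g x) = dsum f - dsum g.
Proof.
  intros [F1 F2] [G1 G2]; unfold dsum.
  rewrite <- Series_minus; auto. apply Series_ext; intro i.
  apply Series_minus; auto.
Qed.

Lemma dsum_plus (f g : state -> R) : dsummable f -> dsummable g ->
  dsummable (fun x => f x + g x) /\ dsum (fun x => f x + g x) = dsum f + dsum g.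
Proof.
  intros [F1 F2] [G1 G2]; unfold dsum, dsummable.
  assert (E : forall i, Series (fun j => f (i,j) + g (i,j)) = Series (fun j => f (i,j)) + Series (fun j => g (i,j))).
  { intro i; apply Series_plus; auto. }
  split. split.
  - intro i. apply (ex_series_plus (V:=R_NormedModule)); auto.
  - eapply ex_series_ext. intro i; symmetry; apply E.
    apply (ex_series_plus (V:=R_NormedModule)); auto.
  - rewrite <- Series_plus; auto. apply Series_ext; intro i; apply E.
Qed.

Lemma dsum_scal (c : R) (f : state -> R) : dsummable f ->
  dsummable (fun x => c * f x) /\ dsum (fun x => c * f x) = c * dsum f.
Proof.
  intros [F1 F2]; unfold dsum, dsummable.
  assert (E : forall i, Series (fun j => c * f (i,j)) = c * Series (fun j => f (i,j))).
  { intro i; apply Series_scal_l. }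
  split. split.
  - intro i. apply (ex_series_scal_l (V:=R_NormedModule)); auto.
  - eapply ex_series_ext. intro i; symmetry; apply E.
    apply (ex_series_scal_l (V:=R_NormedModule)); auto.
  - rewrite <- Series_scal_l. apply Series_ext; intro i; apply E.
Qed.

Lemma Cmod_le_sum (a b : R) : Cmod (a, b) <= Rabs a + Rabs b.
Proof.
  unfold Cmod; cbn [fst snd].
  rewrite <- (sqrt_pow2 (Rabs a + Rabs b)) by (pose proof (Rabs_pos a); pose proof (Rabs_pos b); lra).
  apply sqrt_le_1_alt.
  rewrite <- (pow2_abs a), <- (pow2_abs b).
  pose proof (Rabs_pos a); pose proof (Rabs_pos b). nra.
Qed.

Lemma ExpC_bound (pi : state -> R) (g : state -> C) (h : state -> R) :
  (forall x, 0 <= pi x) -> (forall x, pi x * Cmod (g x) <= h x) -> dsummable h ->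
  integrableC pi g /\ Cmod (ExpC pi g) <= 2 * dsum h.
Proof.
  intros Hpi Hh Hd.
  destruct (dsum_dom (fun x => pi x * Cmod (g x)) h) as [I1 I2]; auto.
  { intro x. rewrite Rabs_pos_eq. apply Hh. apply Rmult_le_pos; auto. apply Cmod_ge_0. }
  split; [exact I1|].
  unfold ExpC, dsumC.
  destruct (dsum_dom (fun x => Re (Cmult (RtoC (pi x)) (g x))) h) as [_ R1]; auto.
  { intro x. eapply Rle_trans; [|apply Hh]. replace (pi x) with (Cmod (RtoC (pi x))) at 2 by (rewrite Cmod_R; apply Rabs_pos_eq; auto). rewrite <- Cmod_mult. apply re_le_Cmod. }
  destruct (dsum_dom (fun x => Im (Cmult (RtoC (pi x)) (g x))) h) as [_ R2]; auto.
  { intro x. eapply Rle_trans; [|apply Hh]. replace (pi x) with (Cmod (RtoC (pi x))) at 2 by (rewrite Cmod_R; apply Rabs_pos_eq; auto). rewrite <- Cmod_mult.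
    pose proof (Rmax_Cmod (Cmult (RtoC (pi x)) (g x))). unfold Im.
    eapply Rle_trans; [apply Rmax_r|exact H]. }
  eapply Rle_trans. apply Cmod_le_sum. lra.
Qed.

Lemma exp_le x y : x <= y -> exp x <= exp y.
Proof. intros [H|H]. left; apply exp_increasing; auto. subst; lra. Qed.

Lemma Cmod_cexp z : Cmod (cexp z) = exp (Re z).
Proof.
  unfold cexp, Cmod; cbn [fst snd].
  replace ((exp (Re z) * cos (Im z)) ^ 2 + (exp (Re z) * sin (Im z)) ^ 2)
    with (exp (Re z) ^ 2 * (sin (Im z) ^2 + cos (Im z) ^2)) by ring.
  rewrite <- !Rsqr_pow2, sin2_cos2, Rmult_1_r, Rsqr_pow2.
  apply sqrt_pow2. left; apply exp_pos.
Qed.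

Lemma sin_sq_pos x : 0 <= x -> sin x ^ 2 <= x ^ 2.
Proof.
  intros Hx. destruct (Rle_lt_dec 1 x).
  - pose proof (SIN_bound x). nra.
  - assert (0 <= sin x). { apply sin_ge_0; auto. pose proof PI2_1; lra. }
    destruct (Req_dec x 0). subst; rewrite sin_0; lra.
    pose proof (sin_lt_x x). nra.
Qed.

Lemma sin_sq x : sin x ^ 2 <= x ^ 2.
Proof.
  destruct (Rle_lt_dec 0 x). apply sin_sq_pos; auto.
  replace (sin x ^ 2) with (sin (-x) ^ 2) by (rewrite sin_neg; ring).
  replace (x ^ 2) with ((-x) ^ 2) by ring. apply sin_sq_pos; lra.
Qed.

Lemma one_m_cos b : 1 - cos b <= b ^ 2 / 2.
Proof.
  replace b with (2 * (b/2)) at 1 by field.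
  rewrite cos_2a_sin. pose proof (sin_sq (b/2)). nra.
Qed.

Lemma expm1_le a : 0 <= a -> 0 <= exp a - 1 <= a * exp a.
Proof.
  intros Ha. pose proof (exp_ineq1_le a). pose proof (exp_ineq1_le (-a)).
  pose proof (exp_pos a). split. lra.
  assert (exp (-a) * exp a = 1). { rewrite <- exp_plus. replace (-a + a) with 0 by ring. apply exp_0. }
  nra.
Qed.

Lemma key_diff A a B b X : A <= 0 -> 0 <= a <= X -> Rabs b <= X ->
  Cmod (Cminus (exp (A + a) * cos (B + b), exp (A + a) * sin (B + b))
               (exp A * cos B, exp A * sin B)) <= 2 * X * exp X.
Proof.
  intros HA Ha Hb.
  assert (HX : 0 <= X) by (pose proof (Rabs_pos b); lra).
  unfold Cminus, Cplus, Copp, Cmod; cbn [fst snd].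
  rewrite exp_plus.
  set (E := exp A). set (e := exp a).
  assert (Hc : cos (B + b) * cos B + sin (B + b) * sin B = cos b).
  { rewrite <- cos_minus. f_equal. ring. }
  pose proof (sin2_cos2 (B + b)) as S1. pose proof (sin2_cos2 B) as S2.
  rewrite !Rsqr_pow2 in S1, S2.
  replace ((E * e * cos (B + b) + - (E * cos B)) ^ 2 + (E * e * sin (B + b) + - (E * sin B)) ^ 2)
    with (E^2 * (e^2 * (sin (B+b) ^2 + cos (B+b) ^2) - 2 * e * (cos (B + b) * cos B + sin (B + b) * sin B)
            + (sin B ^2 + cos B ^2))) by ring.
  rewrite S1, S2, Hc.
  rewrite <- (sqrt_pow2 (2 * X * exp X)) by (pose proof (exp_pos X); nra).
  apply sqrt_le_1_alt.
  assert (HE : 0 < E <= 1).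
  { split. apply exp_pos. unfold E. rewrite <- exp_0. apply exp_le; auto. }
  assert (He : 0 <= e - 1 <= a * e) by (apply expm1_le; lra).
  assert (HeX : e <= exp X) by (apply exp_le; lra).
  assert (H1X : 1 <= exp X) by (rewrite <- exp_0; apply exp_le; lra).
  pose proof (one_m_cos b) as Hcb.
  assert (Hb2 : b ^ 2 <= X ^ 2) by (rewrite <- (pow2_abs b); pose proof (Rabs_pos b); nra).
  assert (Hcb' : 0 <= 1 - cos b) by (pose proof (COS_bound b); lra).
  assert (Hin : e ^ 2 - 2 * e * cos b + 1 <= 4 * X^2 * exp X ^ 2).
  { replace (e ^ 2 - 2 * e * cos b + 1) with ((e - 1)^2 + 2 * e * (1 - cos b)) by ring.
    assert (0 < e) by apply exp_pos.
    assert (a * e <= X * exp X) by (apply Rmult_le_compat; lra).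
    assert ((e-1)^2 <= (X * exp X)^2) by (apply pow_incr; lra).
    assert (2 * e * (1 - cos b) <= exp X * X^2) by nra.
    nra. }
  assert (0 <= e ^ 2 - 2 * e * cos b + 1) by nra.
  assert (E ^ 2 <= 1) by nra.
  replace ((2 * X * exp X) ^ 2) with (4 * X^2 * exp X ^ 2) by ring.
  apply Rle_trans with (1 * (e ^ 2 - 2 * e * cos b + 1)); [|lra].
  rewrite Rmult_1_r. apply Rmult_le_compat_r; lra.
Qed.

Lemma qn_pos x : 0 <= qperp_norm x.
Proof. unfold qperp_norm; apply sqrt_pos. Qed.

Lemma qn_d x : (fst x < snd x)%nat -> q2R x - q1R x <= 2 * qperp_norm x.
Proof.
  intros H. unfold qperp_norm, qperp.
  replace (Nat.ltb (fst x) (snd x)) with true by (symmetry; apply Nat.ltb_lt; auto).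
  cbn [fst snd].
  set (d := q2R x - q1R x).
  set (S := (d / 2 * -1) ^ 2 + (d / 2 * 1) ^ 2).
  assert (HS : 0 <= S) by (unfold S; nra).
  pose proof (sqrt_pos S). pose proof (sqrt_sqrt S HS).
  destruct (Rle_lt_dec d (2 * sqrt S)); auto.
  exfalso. assert (0 <= d) by nra.
  assert (d * d > 4 * (sqrt S * sqrt S)) by nra.
  rewrite H1 in H3. unfold S in H3. nra.
Qed.

Lemma qlt x : (fst x < snd x)%nat -> q1R x < q2R x.
Proof. intros; unfold q1R, q2R; apply lt_INR; auto. Qed.

Lemma Cmod_joint phi1 phi2 eps x : 0 < eps -> Re phi1 <= 0 -> Re (Cplus phi1 phi2) <= 0 ->
  Cmod (tr_joint phi1 phi2 eps x) <= exp (eps * (- 2 * Re phi1) * qperp_norm x).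
Proof.
  intros He H1 H12. unfold tr_joint. rewrite Cmod_cexp. apply exp_le.
  destruct phi1 as [r1 i1], phi2 as [r2 i2]. unfold Re, Cplus in *; cbn [fst snd] in *.
  unfold Cmult, RtoC; cbn [fst snd].
  pose proof (qn_pos x).
  assert (Q1 : 0 <= q1R x) by apply pos_INR.
  assert (Q2 : 0 <= q2R x) by apply pos_INR.
  apply Rle_trans with (eps * ((r1+r2)*q2R x + (-r1)*(q2R x - q1R x))); [right; ring|].
  replace (eps*(-2*r1)*qperp_norm x) with (eps*((-r1)*(2*qperp_norm x))) by ring.
  apply Rmult_le_compat_l; [lra|].
  assert ((r1+r2)*q2R x <= 0) by nra.
  destruct (Nat.lt_ge_cases (fst x) (snd x)) as [Hl|Hl].
  - pose proof (qn_d x Hl).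
    assert ((-r1)*(q2R x - q1R x) <= (-r1)*(2*qperp_norm x)) by (apply Rmult_le_compat_l; lra).
    lra.
  - assert (q2R x <= q1R x) by (unfold q1R, q2R; apply le_INR; auto).
    assert ((-r1)*(q2R x - q1R x) <= 0) by nra.
    assert (0 <= (-r1)*(2*qperp_norm x)) by nra.
    lra.
Qed.

Lemma Cmod_q2 phi1 phi2 eps x : 0 < eps -> Re (Cplus phi1 phi2) <= 0 ->
  Cmod (tr_q2 phi1 phi2 eps x) <= 1.
Proof.
  intros He H12. unfold tr_q2. rewrite Cmod_cexp. apply Rle_trans with (exp 0); [|rewrite exp_0; lra]. apply exp_le.
  destruct phi1 as [r1 i1], phi2 as [r2 i2]. unfold Re, Cplus in *; cbn [fst snd] in *.
  unfold Cmult, RtoC; cbn [fst snd].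
  assert (Q2 : 0 <= q2R x) by apply pos_INR.
  apply Rle_trans with (eps*((r1+r2)*q2R x)); [right;ring|].
  assert ((r1+r2)*q2R x <= 0) by nra. nra.
Qed.

Lemma Cmod_q1 phi1 eps x : 0 < eps -> Re phi1 <= 0 ->
  Cmod (tr_q1 phi1 eps x) <= 1.
Proof.
  intros He H1. unfold tr_q1. rewrite Cmod_cexp. apply Rle_trans with (exp 0); [|rewrite exp_0; lra]. apply exp_le.
  destruct phi1 as [r1 i1]. unfold Re in *; cbn [fst snd] in *.
  unfold Cmult, RtoC; cbn [fst snd].
  assert (Q1 : 0 <= q1R x) by apply pos_INR.
  apply Rle_trans with (eps*(r1*q1R x)); [right;ring|].
  assert (r1*q1R x <= 0) by nra. nra.
Qed.

Lemma Cmod_coll phi1 phi2 eps x : 0 < eps -> Re phi1 <= 0 -> Re (Cplus phi1 phi2) <= 0 ->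
  Cmod (tr_collapsed phi1 phi2 eps x) <= 1.
Proof.
  intros He H1 H12. unfold tr_collapsed. rewrite Cmod_cexp. apply Rle_trans with (exp 0); [|rewrite exp_0; lra]. apply exp_le.
  destruct phi1 as [r1 i1], phi2 as [r2 i2]. unfold Re, Cplus in *; cbn [fst snd] in *.
  unfold Cmult, RtoC; cbn [fst snd].
  assert (Q2 : 0 <= q2R x) by apply pos_INR.
  destruct (Nat.leb (snd x) (fst x)) eqn:E.
  - apply Nat.leb_le in E. assert (q2R x <= q1R x) by (unfold q1R, q2R; apply le_INR; auto).
    apply Rle_trans with (eps*(r1*(q1R x - q2R x) + (r1+r2)*q2R x)); [right;ring|].
    assert ((r1+r2)*q2R x <= 0) by nra. assert (r1*(q1R x - q2R x) <= 0) by nra. nra.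
  - apply Rle_trans with (eps*((r1+r2)*q2R x)); [right;ring|].
    assert ((r1+r2)*q2R x <= 0) by nra. nra.
Qed.

Lemma diff_bound phi1 phi2 eps x : 0 < eps -> Re phi1 <= 0 -> Re (Cplus phi1 phi2) <= 0 ->
  Cmod (Cminus (tr_joint phi1 phi2 eps x) (tr_collapsed phi1 phi2 eps x)) <=
  2 * eps * Cmod phi1 * (qperp_norm x ^ 2 + exp (eps * (4 * Cmod phi1) * qperp_norm x)).
Proof.
  intros He H1 H12.
  pose proof (qn_pos x) as Hn. pose proof (Cmod_ge_0 phi1) as Hc.
  assert (Hr : 0 <= 2 * eps * Cmod phi1 * (qperp_norm x ^ 2 + exp (eps * (4 * Cmod phi1) * qperp_norm x))).
  { pose proof (exp_pos (eps * (4 * Cmod phi1) * qperp_norm x)).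
    apply Rmult_le_pos; [nra|]. nra. }
  destruct (Nat.leb (snd x) (fst x)) eqn:E.
  - assert (Heq : tr_joint phi1 phi2 eps x = tr_collapsed phi1 phi2 eps x).
    { unfold tr_joint, tr_collapsed, cexp. rewrite E.
      destruct phi1 as [r1 i1], phi2 as [r2 i2].
      unfold Re, Im, Cmult, Cplus, RtoC; cbn [fst snd].
      f_equal; f_equal; f_equal; ring. }
    rewrite Heq.
    replace (Cminus (tr_collapsed phi1 phi2 eps x) (tr_collapsed phi1 phi2 eps x)) with (RtoC 0)
      by (unfold Cminus, Cplus, Copp, RtoC; cbn [fst snd]; f_equal; ring).
    rewrite Cmod_R, Rabs_R0. exact Hr.
  - apply Nat.leb_gt in E.
    pose proof (qn_d x E) as Hd. pose proof (qlt x E) as Hlt.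
    assert (Q2 : 0 <= q2R x) by apply pos_INR.
    set (c := Cmod phi1) in *. set (n := qperp_norm x) in *.
    assert (Hr1 : Rabs (Re phi1) <= c) by apply re_le_Cmod.
    assert (Hi1 : Rabs (Im phi1) <= c).
    { pose proof (Rmax_Cmod phi1). eapply Rle_trans; [apply Rmax_r|exact H]. }
    clearbody c.
    destruct phi1 as [r1 i1], phi2 as [r2 i2]. unfold Re, Im, Cplus in *; cbn [fst snd] in *.
    set (d := q2R x - q1R x) in *.
    assert (Hj : tr_joint (r1, i1) (r2, i2) eps x =
      (exp (eps * ((r1 + r2) * q2R x) + eps * (- r1) * d) * cos (eps * ((i1 + i2) * q2R x) + eps * (- i1) * d),
       exp (eps * ((r1 + r2) * q2R x) + eps * (- r1) * d) * sin (eps * ((i1 + i2) * q2R x) + eps * (- i1) * d))).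
    { unfold tr_joint, cexp, d. unfold Re, Im, Cmult, Cplus, RtoC; cbn [fst snd].
      f_equal; f_equal; f_equal; ring. }
    assert (Hk : tr_collapsed (r1, i1) (r2, i2) eps x =
      (exp (eps * ((r1 + r2) * q2R x)) * cos (eps * ((i1 + i2) * q2R x)),
       exp (eps * ((r1 + r2) * q2R x)) * sin (eps * ((i1 + i2) * q2R x)))).
    { unfold tr_collapsed, cexp. replace (Nat.leb (snd x) (fst x)) with false
        by (symmetry; apply Nat.leb_gt; auto).
      unfold Re, Im, Cmult, Cplus, RtoC; cbn [fst snd].
      f_equal; f_equal; f_equal; ring. }
    rewrite Hj, Hk.
    assert (Hd0 : 0 < d) by (unfold d; lra).
    eapply Rle_trans. apply (key_diff _ _ _ _ (eps * c * d)).
    + assert ((r1 + r2) * q2R x <= 0) by nra. nra.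
    + split. apply Rmult_le_pos; [apply Rmult_le_pos|]; lra. apply Rmult_le_compat_r; [lra|]. apply Rmult_le_compat_l; [lra|].
      rewrite Rabs_left1 in Hr1 by lra. lra.
    + rewrite Rabs_mult, Rabs_mult, (Rabs_pos_eq eps), (Rabs_pos_eq d), Rabs_Ropp by lra.
      apply Rmult_le_compat_r; [lra|]. apply Rmult_le_compat_l; [lra|]. lra.
    + set (Y := eps * c * (2 * n)).
      assert (HXY : eps * c * d <= Y) by (unfold Y; apply Rmult_le_compat_l; nra).
      assert (HX0 : 0 <= eps * c * d) by (apply Rmult_le_pos; [apply Rmult_le_pos|]; lra).
      assert (exp (eps * c * d) <= exp Y) by (apply exp_le; auto).
      pose proof (exp_pos (eps * c * d)).
      apply Rle_trans with (2 * Y * exp Y).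
      { apply Rmult_le_compat; nra. }
      assert (Hsq : exp (eps * (4 * c) * n) = exp (Y / 2) * exp (Y / 2) * (exp (Y / 2) * exp (Y/2))).
      { rewrite <- !exp_plus. f_equal. unfold Y; field. }
      assert (HY : exp Y = exp (Y / 2) * exp (Y / 2)).
      { rewrite <- !exp_plus. f_equal. field. }
      rewrite Hsq, HY.
      set (G := exp (Y / 2) * exp (Y / 2)).
      assert (0 <= eps * c) by nra.
      assert (2 * n * G <= n ^ 2 + G * G) by (pose proof (pow2_ge_0 (n - G)); nra).
      apply Rle_trans with (2 * eps * c * (2 * n * G)); [right; unfold Y; ring|].
      apply Rmult_le_compat_l; nra.
Qed.

Lemma Re_pi_le p z : 0 <= p -> Rabs (Re (Cmult (RtoC p) z)) <= p * Cmod z.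
Proof.
  intros Hp. replace p with (Cmod (RtoC p)) at 2 by (rewrite Cmod_R; apply Rabs_pos_eq; auto).
  rewrite <- Cmod_mult. apply re_le_Cmod.
Qed.

Lemma Im_pi_le p z : 0 <= p -> Rabs (Im (Cmult (RtoC p) z)) <= p * Cmod z.
Proof.
  intros Hp. replace p with (Cmod (RtoC p)) at 2 by (rewrite Cmod_R; apply Rabs_pos_eq; auto).
  rewrite <- Cmod_mult. pose proof (Rmax_Cmod (Cmult (RtoC p) z)). unfold Im.
  eapply Rle_trans; [apply Rmax_r|exact H].
Qed.

Lemma ExpC_minus pi f g : (forall x, 0 <= pi x) -> integrableC pi f -> integrableC pi g ->
  Cminus (ExpC pi f) (ExpC pi g) = ExpC pi (fun x => Cminus (f x) (g x)).
Proof.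
  intros Hp If Ig.
  assert (D : forall h, integrableC pi h ->
     dsummable (fun x => Re (Cmult (RtoC (pi x)) (h x))) /\
     dsummable (fun x => Im (Cmult (RtoC (pi x)) (h x)))).
  { intros h Ih. split.
    - apply (proj1 (dsum_dom _ _ (fun x => Re_pi_le (pi x) (h x) (Hp x)) Ih)).
    - apply (proj1 (dsum_dom _ _ (fun x => Im_pi_le (pi x) (h x) (Hp x)) Ih)). }
  destruct (D f If) as [F1 F2], (D g Ig) as [G1 G2].
  unfold ExpC, dsumC, Cminus, Cplus, Copp; cbn [fst snd].
  f_equal.
  - match goal with |- ?a + - ?b = _ => replace (a + - b) with (a - b) by ring end.
    rewrite <- dsum_minus by auto. apply dsum_ext; intro x.
    unfold Re, Cmult, RtoC; cbn [fst snd]; ring.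
  - match goal with |- ?a + - ?b = _ => replace (a + - b) with (a - b) by ring end.
    rewrite <- dsum_minus by auto. apply dsum_ext; intro x.
    unfold Im, Cmult, RtoC; cbn [fst snd]; ring.
Qed.

Lemma dsum_nonneg f : (forall x, 0 <= f x) -> dsummable f -> 0 <= dsum f.
Proof.
  intros H Hf. destruct (dsum_scal 0 f Hf) as [_ E].
  rewrite Rmult_0_l in E. rewrite <- E. apply dsum_le; auto.
  intro x; specialize (H x); split; lra.
Qed.

Lemma cond_bound pi A g : (forall x, 0 <= pi x) -> dsummable pi -> (forall x, Cmod (g x) <= 1) ->
  integrableC pi (restrC A g) /\ Cmod (CondExpC pi A g) <= 2.
Proof.
  intros Hp Hd Hg.
  set (h := fun x => if A x then pi x else 0).
  assert (Hh : dsummable h).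
  { refine (proj1 (dsum_dom h pi _ Hd)). intro x.
    unfold h; destruct (A x); [rewrite Rabs_pos_eq; auto; lra|rewrite Rabs_R0; auto]. }
  destruct (ExpC_bound pi (restrC A g) h) as [I B]; auto.
  { intro x. unfold h, restrC. destruct (A x).
    - specialize (Hg x); specialize (Hp x); nra.
    - rewrite Cmod_R, Rabs_R0, Rmult_0_r; lra. }
  split; auto.
  unfold CondExpC. rewrite Cmod_mult, Cmod_R.
  assert (HP : 0 <= Pr pi A).
  { apply dsum_nonneg; auto. intro x; destruct (A x); auto; lra. }
  change (Pr pi A) with (dsum h) in *.
  destruct HP as [HP|HP].
  - rewrite Rabs_pos_eq by (left; apply Rinv_0_lt_compat; auto).
    apply Rle_trans with (2 * dsum h * / dsum h).
    apply Rmult_le_compat_r; auto. left; apply Rinv_0_lt_compat; auto.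
    right; field; lra.
  - rewrite <- HP, Rinv_0, Rabs_R0, Rmult_0_r; lra.
Qed.

Theorem lemma8
  (mu1 mu2 gamma epsbar : R)
  (hmu1 : 0 < mu1) (hmu2 : 0 < mu2) (hgamma : 0 < gamma)
  (hepsbar : 0 < epsbar <= 1)
  (hlam2 : forall eps, 0 < eps < epsbar -> 0 < lam2 mu1 mu2 gamma eps)
  (sigma : R -> state -> R) (pi : R -> state -> R)
  (hpol : forall eps, 0 < eps < epsbar -> policy_ok (sigma eps))
  (hirr : forall eps, 0 < eps < epsbar -> irreducible mu1 mu2 gamma eps (sigma eps))
  (hstat : forall eps, 0 < eps < epsbar -> stationary mu1 mu2 gamma eps (sigma eps) (pi eps))
  (hssc : ssc epsbar pi)
  (phi1 phi2 : C)
  (hphi1 : Re phi1 <= 0) (hphi12 : Re (Cplus phi1 phi2) <= 0) :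
  (* 1. the limits as eps -> 0 of the moduli are finite *)
  (exists e0 M, 0 < e0 /\ forall eps, 0 < eps <= e0 -> eps < epsbar ->
     integrableC (pi eps) (tr_joint phi1 phi2 eps) /\
     Cmod (ExpC (pi eps) (tr_joint phi1 phi2 eps)) <= M) /\
  (exists e0 M, 0 < e0 /\ forall eps, 0 < eps <= e0 -> eps < epsbar ->
     integrableC (pi eps) (restrC ev_q1_le_q2 (tr_q2 phi1 phi2 eps)) /\
     Cmod (CondExpC (pi eps) ev_q1_le_q2 (tr_q2 phi1 phi2 eps)) <= M) /\
  (exists e0 M, 0 < e0 /\ forall eps, 0 < eps <= e0 -> eps < epsbar ->
     integrableC (pi eps) (restrC ev_q2_eq0 (tr_q1 phi1 eps)) /\
     Cmod (CondExpC (pi eps) ev_q2_eq0 (tr_q1 phi1 eps)) <= M) /\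
  (* 2. the two transforms have the same limit as eps -> 0 *)
  (forall delta, 0 < delta -> exists e0, 0 < e0 /\
     forall eps, 0 < eps <= e0 -> eps < epsbar ->
       integrableC (pi eps) (tr_collapsed phi1 phi2 eps) /\
       Cmod (Cminus (ExpC (pi eps) (tr_joint phi1 phi2 eps))
                    (ExpC (pi eps) (tr_collapsed phi1 phi2 eps))) < delta).
Proof.
  assert (HP : forall eps, 0 < eps < epsbar -> (forall x, 0 <= pi eps x) /\ dsummable (pi eps)).
  { intros eps He. destruct (hstat eps He) as [[A [B _]] _]. auto. }
  destruct hssc as [Hexp Hmom].
  split; [|split; [|split]].
  - destruct (Hexp (-2 * Re phi1)) as [et [Cs [Het Hb]]]; [lra|].
    exists et, (2 * Cs). split; auto. intros eps He1 He2.
    destruct (Hb eps He1 He2) as [Hd HE].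
    destruct (HP eps) as [Hpos Hpd]; [lra|].
    destruct (ExpC_bound (pi eps) (tr_joint phi1 phi2 eps)
      (fun x => pi eps x * exp (eps * (-2 * Re phi1) * qperp_norm x))) as [I B]; auto.
    { intro x. apply Rmult_le_compat_l; auto. apply Cmod_joint; lra. }
    split; auto. unfold ExpR in HE. lra.
  - exists 1, 2. split; [lra|]. intros eps He1 He2.
    destruct (HP eps) as [Hpos Hpd]; [lra|].
    apply cond_bound; auto. intro x; apply Cmod_q2; auto; lra.
  - exists 1, 2. split; [lra|]. intros eps He1 He2.
    destruct (HP eps) as [Hpos Hpd]; [lra|].
    apply cond_bound; auto. intro x; apply Cmod_q1; auto; lra.
  - intros delta Hdel.
    set (c := Cmod phi1).
    assert (Hc : 0 <= c) by apply Cmod_ge_0.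
    assert (Hr1 : Rabs (Re phi1) <= c) by apply re_le_Cmod.
    destruct (Hexp (4 * c)) as [et [Cs [Het Hb]]]; [lra|].
    destruct (Hmom 2%nat) as [C2 H2].
    set (K := 8 * (c + 1) * (Rabs C2 + Rabs Cs + 1)).
    assert (HK : 0 < K) by (unfold K; pose proof (Rabs_pos C2); pose proof (Rabs_pos Cs); nra).
    exists (Rmin et (delta / K)). split.
    { apply Rmin_pos; auto. apply Rdiv_lt_0_compat; auto. }
    intros eps He1 He2.
    assert (Hee : eps <= et) by (eapply Rle_trans; [apply He1|apply Rmin_l]).
    assert (Hed : eps <= delta / K) by (eapply Rle_trans; [apply He1|apply Rmin_r]).
    destruct (HP eps) as [Hpos Hpd]; [lra|].
    destruct (Hb eps (conj (proj1 He1) Hee) He2) as [Hd HE].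
    destruct (H2 eps (conj (proj1 He1) He2)) as [Hd2 HE2].
    unfold ExpR in HE, HE2.
    destruct (ExpC_bound (pi eps) (tr_collapsed phi1 phi2 eps) (pi eps)) as [Ic _]; auto.
    { intro x. pose proof (Cmod_coll phi1 phi2 eps x (proj1 He1) hphi1 hphi12).
      specialize (Hpos x). nra. }
    destruct (ExpC_bound (pi eps) (tr_joint phi1 phi2 eps)
      (fun x => pi eps x * exp (eps * (4 * c) * qperp_norm x))) as [Ij _]; auto.
    { intro x. apply Rmult_le_compat_l; auto.
      eapply Rle_trans. apply Cmod_joint; lra. apply exp_le.
      pose proof (qn_pos x). rewrite Rabs_left1 in Hr1 by lra.
      apply Rmult_le_compat_r; auto. apply Rmult_le_compat_l; lra. }
    split; auto.
    rewrite ExpC_minus by auto.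
    destruct (dsum_plus (fun x => pi eps x * qperp_norm x ^ 2)
                        (fun x => pi eps x * exp (eps * (4 * c) * qperp_norm x)) Hd2 Hd)
      as [Hs1 Hs2].
    destruct (dsum_scal (2 * eps * c) _ Hs1) as [Hs3 Hs4].
    destruct (ExpC_bound (pi eps) (fun x => Cminus (tr_joint phi1 phi2 eps x) (tr_collapsed phi1 phi2 eps x))
      (fun x => 2 * eps * c * (pi eps x * qperp_norm x ^ 2 + pi eps x * exp (eps * (4 * c) * qperp_norm x))) Hpos) as [_ B]; [|exact Hs3|].
    { intro x. eapply Rle_trans. apply Rmult_le_compat_l; [apply Hpos|].
      apply diff_bound; lra. right; unfold c; ring. }
    eapply Rle_lt_trans; [exact B|]. rewrite Hs4, Hs2.
    set (E2 := dsum (fun x => pi eps x * qperp_norm x ^ 2)) in *.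
    set (Ee := dsum (fun x => pi eps x * exp (eps * (4 * c) * qperp_norm x))) in *.
    assert (E2 <= Rabs C2) by (eapply Rle_trans; [exact HE2|apply Rle_abs]).
    assert (Ee <= Rabs Cs) by (pose proof (Rle_abs Cs); lra).
    assert (0 <= E2).
    { apply dsum_nonneg; auto. intro x. pose proof (Hpos x). pose proof (pow2_ge_0 (qperp_norm x)). nra. }
    assert (0 <= Ee).
    { apply dsum_nonneg; auto. intro x. pose proof (Hpos x). pose proof (exp_pos (eps * (4 * c) * qperp_norm x)). nra. }
    assert (eps * K <= delta).
    { apply (Rmult_le_compat_r K) in Hed; [|lra]. unfold Rdiv in Hed.
      rewrite Rmult_assoc, Rinv_l, Rmult_1_r in Hed; lra. }
    assert (2 * (2 * eps * c * (E2 + Ee)) <= eps * K / 2).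
    { unfold K. pose proof (Rabs_pos C2). pose proof (Rabs_pos Cs).
      assert (c * (E2 + Ee) <= (c + 1) * (Rabs C2 + Rabs Cs + 1)) by nra.
      destruct He1. nra. }
    lra.
Qed.
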